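(* Let $\lambda>0$, $L=D^2+\lambda^2$ and $[a,b]=[0,\pi/\lambda]$. Consider partitions $\Delta=\{0=t_1<\dots<t_n=\pi/\lambda\}$ in which one subsegment $[t_j,t_{j+1}]$ has length $\pi/\lambda-\varepsilon$ (so that the sum of the lengths of all other subsegments is $\varepsilon>0$). Then, as $\varepsilon\to 0$, uniformly in such partitions and in $f\in C[a,b]$, \[ \max_{i=1,\dots,n}\bigl|P_{\mathbb{S}(L,\Delta)}f(t_i)\bigr|\le\Bigl(\frac{38}{\pi}+O(\varepsilon)\Bigr)\|f\|_\infty . \]
   Context: The space of trigonometric $L$-splines $\mathbb{S}(L,\Delta)$ consists of the continuous functions $s$ on $[a,b]$ such that on each subsegment $[t_i,t_{i+1}]$ of the partition, $s$ is a linear combination of $\sin\lambda x$ and $\cos\lambda x$. $P_{\mathbb{S}(L,\Delta)}:C[a,b]\to\mathbb{S}(L,\Delta)$ is the orthogonal projection with respect to the $L_2[a,b]$ inner product, i.e. $P f\in\mathbb{S}(L,\Delta)$ and $\langle f,s\rangle=\langle Pf,s\rangle$ for all $s\in\mathbb{S}(L,\Delta)$. $\|f\|_\infty$ denotes the uniform norm on $[a,b]$. *)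

(* Defs.v *)
From Stdlib Require Import Reals.
From Coquelicot Require Import Coquelicot.
Open Scope R_scope.

Definition in_seg (a b x : R) : Prop := a <= x <= b.

Definition cont_on (a b : R) (f : R -> R) : Prop :=
  forall x, in_seg a b x ->
    filterlim f (within (in_seg a b) (locally x)) (locally (f x)).

Definition sup_norm (a b : R) (f : R -> R) : R :=
  real (Lub_Rbar (fun y => exists x, in_seg a b x /\ y = Rabs (f x))).

Definition L2ip (a b : R) (f g : R -> R) : R := RInt (fun x => f x * g x) a b.

Definition is_partition (a b : R) (n : nat) (t : nat -> R) : Prop :=
  (0 < n)%nat /\ t 0%nat = a /\ t n = b /\
  (forall i, (i < n)%nat -> t i < t (S i)).

Definition trig_spline (lam a b : R) (n : nat) (t : nat -> R) (s : R -> R) : Prop :=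
  cont_on a b s /\
  forall i, (i < n)%nat ->
    exists alpha beta : R, forall x, t i <= x <= t (S i) ->
      s x = alpha * sin (lam * x) + beta * cos (lam * x).

Definition is_orth_proj (lam a b : R) (n : nat) (t : nat -> R) (f p : R -> R) : Prop :=
  trig_spline lam a b n t p /\
  forall s, trig_spline lam a b n t s -> L2ip a b f s = L2ip a b p s.

(* Main.v *)
Require Import Defs.
From Stdlib Require Import Reals.
From Coquelicot Require Import Coquelicot.
From Stdlib Require Import Lra Lia Psatz.
Open Scope R_scope.

Module P0.
Open Scope R_scope.

Definition clamp (a b y : R) : R := (a + b + Rabs (y - a) - Rabs (y - b)) / 2.

Lemma clamp_lo a b y : a <= b -> y <= a -> clamp a b y = a.
Proof. intros. unfold clamp. rewrite (Rabs_left1 (y - a)) by lra.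
  rewrite (Rabs_left1 (y - b)) by lra. field. Qed.
Lemma clamp_hi a b y : a <= b -> b <= y -> clamp a b y = b.
Proof. intros. unfold clamp. rewrite (Rabs_pos_eq (y - a)) by lra.
  rewrite (Rabs_pos_eq (y - b)) by lra. field. Qed.
Lemma clamp_mid a b y : a <= y <= b -> clamp a b y = y.
Proof. intros. unfold clamp. rewrite (Rabs_pos_eq (y - a)) by lra.
  rewrite (Rabs_left1 (y - b)) by lra. field. Qed.
Lemma clamp_in a b y : a <= b -> a <= clamp a b y <= b.
Proof. intros. destruct (Rle_dec y a). rewrite clamp_lo; lra.
  destruct (Rle_dec b y). rewrite clamp_hi; lra. rewrite clamp_mid; lra. Qed.

Definition cont (f : R -> R) := forall x, continuous f x.

Lemma cont_clamp a b : cont (clamp a b).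
Proof. intro x. unfold clamp.
  apply (continuous_mult (fun y => a + b + Rabs (y - a) - Rabs (y - b)) (fun _ => /2)).
  2: apply continuous_const.
  apply (continuous_minus (fun y => a + b + Rabs (y - a)) (fun y => Rabs (y - b))).
  apply (continuous_plus (fun _ => a + b) (fun y => Rabs (y - a))).
  apply continuous_const.
  apply (continuous_comp (fun y => y - a) Rabs). 
  apply (continuous_minus (fun y => y) (fun _ => a)). apply continuous_id. apply continuous_const.
  apply continuous_Rabs.
  apply (continuous_comp (fun y => y - b) Rabs). 
  apply (continuous_minus (fun y => y) (fun _ => b)). apply continuous_id. apply continuous_const.
  apply continuous_Rabs.
Qed.

Lemma cont_plus f g : cont f -> cont g -> cont (fun x => f x + g x).
Proof. intros Hf Hg x. apply (continuous_plus f g); auto. Qed.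
Lemma cont_minus f g : cont f -> cont g -> cont (fun x => f x - g x).
Proof. intros Hf Hg x. apply (continuous_minus f g); auto. Qed.
Lemma cont_mult f g : cont f -> cont g -> cont (fun x => f x * g x).
Proof. intros Hf Hg x. apply (continuous_mult f g); auto. Qed.
Lemma cont_const c : cont (fun _ => c).
Proof. intros x. apply continuous_const. Qed.
Lemma cont_comp f g : cont f -> cont g -> cont (fun x => g (f x)).
Proof. intros Hf Hg x. apply (continuous_comp f g); auto. Qed.
Lemma cont_sin_aff a b : cont (fun x => sin (a * x + b)).
Proof. intros x. apply (ex_derive_continuous (K:=R_AbsRing) (V:=R_NormedModule)). auto_derive. auto. Qed.

Lemma cont_ex_RInt f a b : cont f -> ex_RInt f a b.
Proof. intros H. apply (ex_RInt_continuous (V:=R_CompleteNormedModule)). intros; apply H. Qed.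

Lemma RInt_lin f g a b c : ex_RInt f a b -> ex_RInt g a b ->
  RInt (fun x => f x + c * g x) a b = RInt f a b + c * RInt g a b.
Proof. intros Hf Hg.
  transitivity (RInt (fun x => plus (f x) (scal c (g x))) a b). reflexivity.
  rewrite (RInt_plus (V:=R_CompleteNormedModule)); auto. rewrite (RInt_scal (V:=R_CompleteNormedModule)); auto. apply (ex_RInt_scal (V:=R_CompleteNormedModule)); auto. Qed.

Lemma RInt_scal' f a b c : ex_RInt f a b -> RInt (fun x => c * f x) a b = c * RInt f a b.
Proof. intros Hf. transitivity (RInt (fun x => scal c (f x)) a b). reflexivity.
  rewrite (RInt_scal (V:=R_CompleteNormedModule)); auto. Qed.

Lemma RInt_sub f g a b : ex_RInt f a b -> ex_RInt g a b ->
  RInt (fun x => f x - g x) a b = RInt f a b - RInt g a b.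
Proof. intros Hf Hg.
  transitivity (RInt (fun x => minus (f x) (g x)) a b). reflexivity.
  rewrite (RInt_minus (V:=R_CompleteNormedModule)); auto. Qed.

Lemma RInt_zero a b : RInt (fun _ => 0) a b = 0.
Proof. rewrite (RInt_const (V:=R_CompleteNormedModule)). unfold scal; simpl. unfold mult; simpl. ring. Qed.


  Lemma RInt_Chasles' f a b c : ex_RInt f a b -> ex_RInt f b c ->
  RInt f a b + RInt f b c = RInt f a c.
Proof. intros. exact (RInt_Chasles (V:=R_CompleteNormedModule) f a b c H H0). Qed.

Lemma RInt_extR (f g : R -> R) a b : (forall x, Rmin a b < x < Rmax a b -> f x = g x) ->
  RInt f a b = RInt g a b.
Proof. intros. apply (RInt_ext (V:=R_CompleteNormedModule)). auto. Qed.

Ltac Req := match goal with |- @eq _ ?a ?b => change (@eq R a b) end.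

End P0.
Import P0.

Module P1.
Open Scope R_scope.

Lemma sin_tay x : 0 <= x <= 1 -> x - x^3/6 <= sin x <= x - x^3/6 + x^5/120.
Proof. intros Hx. destruct (pre_sin_bound x 0) as [H1 H2]; try lra.
  unfold sin_approx, sin_term in H1, H2. simpl in H1, H2. split; lra. Qed.
Lemma cos_tay x : 0 <= x <= 1 -> 1 - x^2/2 <= cos x <= 1 - x^2/2 + x^4/24.
Proof. intros Hx. destruct (pre_cos_bound x 0) as [H1 H2]; try lra.
  unfold cos_approx, cos_term in H1, H2. simpl in H1, H2. split; lra. Qed.
Lemma PI_lb : 8/3 <= PI.
Proof. pose proof (PI_ineq 0) as [H _]. unfold tg_alt, PI_tg in H. simpl in H. lra. Qed.

Definition Aval H := (H/2 - sin(2*H)/4)/(sin H)^2.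
Definition Bval H := (sin H - H * cos H)/(2 * (sin H)^2).
Definition Gval H := (1 - cos H)/sin H.

Lemma small_facts H : 0 < H <= 1/50 ->
  Gval H / 4 <= Aval H - Bval H /\ Aval H + Bval H <= H /\ 0 <= Bval H /\
  0 < Gval H <= H /\ 0 < sin H.
Proof. intros HH.
  destruct (sin_tay H) as [s1 s2]; try lra.
  destruct (cos_tay H) as [c1 c2]; try lra.
  set (s := sin H) in *. set (c := cos H) in *.
  assert (H3 : H^3 <= H^2/50) by (simpl; nra).
  assert (H5 : H^5 <= H^3/2500) by (simpl; nra).
  assert (Hs : 0 < s) by (simpl in *; nra).
  assert (Hc1 : c <= 1) by (unfold c; apply COS_bound).
  unfold Aval, Bval, Gval. rewrite sin_2a. fold s c.
  assert (Hs2 : 0 < s^2) by (simpl; nra).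
  split; [|split; [|split; [|split]]].
  -
    apply (Rmult_le_reg_r (4 * s^2)); [lra|].
    replace ((1 - c) / s / 4 * (4 * s ^ 2)) with ((1-c)*s) by (field; lra).
    replace (((H / 2 - 2 * s * c / 4) / s ^ 2 - (s - H * c) / (2 * s ^ 2)) * (4 * s ^ 2))
      with (2*H - 2*s*c - 2*s + 2*H*c) by (field; lra).
    assert (0 <= 2*H*(1+c) - s*(3+c)); [|nra].
    assert (Hsu : s*(3+c) <= (H - H^3/6 + H^5/120)*(3+c)) by (apply Rmult_le_compat_r; simpl in *; nra).
    assert (Hcl : (1 - H^2/2)*(2*H - (H - H^3/6 + H^5/120)) <= c*(2*H - (H - H^3/6 + H^5/120))).
    { apply Rmult_le_compat_r; simpl in *; nra. }
    simpl in *. nra.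
  - apply (Rmult_le_reg_r (2 * s^2)); [lra|].
    replace (((H / 2 - 2 * s * c / 4) / s ^ 2 + (s - H * c) / (2 * s ^ 2)) * (2 * s ^ 2))
      with ((H + s)*(1-c)) by (field; lra).
    assert (Hm : (H+s)*(1-c) <= (2*H)*(H^2/2)).
    { apply Rmult_le_compat; simpl in *; nra. }
    assert (Hs3 : (H - H^3/6)^2 <= s^2).
    { apply pow_incr. simpl in *; nra. }
    simpl in *. nra.
  - apply Rmult_le_pos; [|apply Rlt_le, Rinv_0_lt_compat; lra].
    assert (H*c <= H*(1 - H^2/2 + H^4/24)) by (apply Rmult_le_compat_l; lra).
    simpl in *. nra.
  - split.
    + apply Rmult_lt_0_compat; [simpl in *; nra|apply Rinv_0_lt_compat; lra].
    + apply (Rmult_le_reg_r s); [lra|]. unfold Rdiv. rewrite Rmult_assoc, Rinv_l by lra.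
      simpl in *. nra.
  - exact Hs.
Qed.

Lemma big_trig e : sin (PI - e) = sin e /\ cos (PI - e) = - cos e.
Proof. rewrite sin_minus, cos_minus, sin_PI, cos_PI. split; ring. Qed.

Lemma big_facts e : 0 < e <= 1/50 ->
  1/2 <= Aval (PI - e) - Bval (PI - e) /\ 2 / (sin e)^2 <= Aval (PI - e) + Bval (PI - e) /\
  0 <= Gval (PI - e) <= 2 / sin e /\ 0 < sin e <= e.
Proof. intros He.
  destruct (sin_tay e) as [s1 s2]; try lra.
  destruct (cos_tay e) as [c1 c2]; try lra.
  pose proof PI_lb. pose proof PI_4.
  destruct (big_trig e) as [Es Ec].
  unfold Aval, Bval, Gval. rewrite sin_2a, Es, Ec.
  set (s := sin e) in *. set (c := cos e) in *.
  assert (H3 : e^3 <= e^2/50) by (simpl; nra).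
  assert (H5 : e^5 <= e^3/2500) by (simpl; nra).
  assert (Hs : 0 < s) by (simpl in *; nra).
  assert (Hc1 : c <= 1) by (unfold c; apply COS_bound).
  assert (Hse : s <= e) by (simpl in *; nra).
  assert (Hs2 : 0 < s^2) by (simpl; nra).
  split; [|split; [|split]].
  - apply (Rmult_le_reg_r (2 * s^2)); [lra|].
    replace (((PI - e) / 2 - 2 * s * - c / 4) / s ^ 2 - (s - (PI - e) * - c) / (2 * s ^ 2)) with
      (((PI - e)*(1-c) - s*(1-c)) / (2*s^2)) by (field; lra).
    replace (((PI - e) * (1 - c) - s * (1 - c)) / (2 * s ^ 2) * (2 * s ^ 2)) with
      ((1-c)*(PI - e - s)) by (field; lra).
    assert (Hm : (e^2/2 - e^4/24) * (5/2) <= (1-c)*(PI - e - s)).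
    { apply Rmult_le_compat; simpl in *; nra. }
    assert (s^2 <= e^2) by (apply pow_incr; lra).
    simpl in *. nra.
  - apply (Rmult_le_reg_r (s^2)); [lra|].
    replace (2 / s ^ 2 * s ^ 2) with 2 by (field; lra).
    replace ((((PI - e) / 2 - 2 * s * - c / 4) / s ^ 2 + (s - (PI - e) * - c) / (2 * s ^ 2)) * s ^ 2)
      with (((PI - e)*(1+c) + s*(1+c))/2) by (field; lra).
    assert (Hm : (5/2) * (19/10) <= (PI - e)*(1+c)).
    { apply Rmult_le_compat; simpl in *; nra. }
    assert (0 <= s*(1+c)) by (apply Rmult_le_pos; simpl in *; nra).
    lra.
  - split.
    + apply Rmult_le_pos; [simpl in *; nra|apply Rlt_le, Rinv_0_lt_compat; lra].
    + unfold Rdiv. apply Rmult_le_compat_r; [apply Rlt_le, Rinv_0_lt_compat; lra|].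
      assert (- 1 <= c) by (unfold c; apply COS_bound). lra.
  - lra.
Qed.

End P1.
Import P1.

Module P2.
Open Scope R_scope.

Section Sp.
Variable lam : R.
Variable n : nat.
Variable t : nat -> R.
Hypothesis Hlam : 0 < lam.
Hypothesis Hinc : forall i, (i < n)%nat -> t i < t (S i).
Hypothesis Hpi : forall i, (i < n)%nat -> lam * (t (S i) - t i) < PI.

Definition Sm m := sin (lam * (t (S m) - t m)).
Definition U m y := sin (lam * (t (S m) - y)) / Sm m.
Definition W m y := sin (lam * (y - t m)) / Sm m.
Definition phi k y :=
  (if Nat.eqb k 0 then 1 else W (k-1) (clamp (t (k-1)) (t k) y)) +
  (if Nat.ltb k n then U k (clamp (t k) (t (S k)) y) else 1) - 1.

Lemma Sm_pos m : (m < n)%nat -> 0 < Sm m.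
Proof. intros. unfold Sm. apply sin_gt_0; auto.
  apply Rmult_lt_0_compat; auto. specialize (Hinc m H). lra. Qed.

Lemma tmono i k : (i <= k)%nat -> (k <= n)%nat -> t i <= t k.
Proof. intros H1 H2. induction k. replace i with 0%nat by lia. lra.
  destruct (Nat.eq_dec i (S k)). subst; lra.
  assert (t i <= t k) by (apply IHk; lia). specialize (Hinc k ltac:(lia)). lra. Qed.

Lemma U_l m : (m < n)%nat -> U m (t m) = 1.
Proof. intros. unfold U. fold (Sm m). pose proof (Sm_pos m H). field. lra. Qed.
Lemma U_r m : U m (t (S m)) = 0.
Proof. unfold U. replace (lam * (t (S m) - t (S m))) with 0 by ring. rewrite sin_0. unfold Rdiv. ring. Qed.
Lemma W_l m : W m (t m) = 0.
Proof. unfold W. replace (lam * (t m - t m)) with 0 by ring. rewrite sin_0. unfold Rdiv. ring. Qed.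
Lemma W_r m : (m < n)%nat -> W m (t (S m)) = 1.
Proof. intros. unfold W. fold (Sm m). pose proof (Sm_pos m H). field. lra. Qed.

Lemma W_r' k : (0 < k)%nat -> (k <= n)%nat -> W (k-1) (t k) = 1.
Proof. intros. replace (t k) with (t (S (k-1))) by (f_equal; lia). apply W_r; lia. Qed.
Lemma tprev k : (0 < k)%nat -> (k <= n)%nat -> t (k-1) < t k.
Proof. intros. assert (E : t k = t (S (k-1))) by (f_equal; lia). rewrite E. apply Hinc; lia. Qed.

Lemma cont_U m : cont (U m).
Proof. unfold U. apply (cont_mult (fun y => sin (lam * (t (S m) - y))) (fun _ => / Sm m)).
  2: apply cont_const.
  intro x. apply (ex_derive_continuous (K:=R_AbsRing) (V:=R_NormedModule)). auto_derive. auto. Qed.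
Lemma cont_W m : cont (W m).
Proof. unfold W. apply (cont_mult (fun y => sin (lam * (y - t m))) (fun _ => / Sm m)).
  2: apply cont_const.
  intro x. apply (ex_derive_continuous (K:=R_AbsRing) (V:=R_NormedModule)). auto_derive. auto. Qed.

Lemma cont_phi k : cont (phi k).
Proof. unfold phi. apply cont_minus; [|apply cont_const]. apply cont_plus.
  - destruct (Nat.eqb k 0). apply cont_const. apply (cont_comp (clamp _ _) (W _)).
    apply cont_clamp. apply cont_W.
  - destruct (Nat.ltb k n). apply (cont_comp (clamp _ _) (U _)).
    apply cont_clamp. apply cont_U. apply cont_const.
Qed.

Lemma phi_piece m k x : (m < n)%nat -> (k <= n)%nat -> t m <= x <= t (S m) ->
  phi k x = (if Nat.eqb k m then U m x else 0) + (if Nat.eqb k (S m) then W m x else 0).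
Proof. intros Hm Hk Hx. unfold phi.
  destruct (Compare_dec.lt_eq_lt_dec k m) as [[Hl|He]|Hg].
  -
    assert (Hkn : (k < n)%nat) by lia.
    rewrite (proj2 (Nat.ltb_lt k n) Hkn).
    rewrite (proj2 (Nat.eqb_neq k m)) by lia. rewrite (proj2 (Nat.eqb_neq k (S m))) by lia.
    assert (t (S k) <= t m) by (apply tmono; lia).
    assert (t k < t (S k)) by auto.
    rewrite (clamp_hi (t k) (t (S k)) x) by lra. rewrite U_r.
    destruct (Nat.eqb_spec k 0). lra.
    assert (t (k-1) < t k) by (apply tprev; lia).
    rewrite clamp_hi by lra. rewrite W_r' by lia. lra.
  - subst k. rewrite Nat.eqb_refl. rewrite (proj2 (Nat.eqb_neq m (S m))) by lia.
    rewrite (proj2 (Nat.ltb_lt m n) Hm). rewrite (clamp_mid (t m) (t (S m)) x) by lra.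
    destruct (Nat.eqb_spec m 0). lra.
    assert (t (m-1) < t m) by (apply tprev; lia).
    rewrite (clamp_hi (t (m-1))) by lra. rewrite W_r' by lia. lra.
  - rewrite (proj2 (Nat.eqb_neq k m)) by lia.
    rewrite (proj2 (Nat.eqb_neq k 0)) by lia.
    destruct (Nat.eqb_spec k (S m)).
    + subst k. replace (S m - 1)%nat with m by lia. rewrite clamp_mid by lra.
      destruct (Nat.ltb_spec (S m) n).
      * assert (t (S m) < t (S (S m))) by auto. rewrite clamp_lo by lra. rewrite U_l by lia. lra.
      * lra.
    + assert (t (S m) <= t (k-1)) by (apply tmono; lia).
      assert (t (k-1) < t k) by (apply tprev; lia).
      rewrite clamp_lo by lra. rewrite W_l.
      destruct (Nat.ltb_spec k n).
      * assert (t k < t (S k)) by auto. rewrite clamp_lo by lra. rewrite U_l by lia. lra.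
      * lra.
Qed.

Lemma U_nonneg m x : (m < n)%nat -> t m <= x <= t (S m) -> 0 <= U m x.
Proof. intros Hm Hx. unfold U. pose proof (Sm_pos m Hm). apply Rmult_le_pos.
  apply sin_ge_0. apply Rmult_le_pos; lra. specialize (Hpi m Hm).
  assert (lam * (t (S m) - x) <= lam * (t (S m) - t m)) by (apply Rmult_le_compat_l; lra). lra.
  apply Rlt_le, Rinv_0_lt_compat; lra. Qed.
Lemma W_nonneg m x : (m < n)%nat -> t m <= x <= t (S m) -> 0 <= W m x.
Proof. intros Hm Hx. unfold W. pose proof (Sm_pos m Hm). apply Rmult_le_pos.
  apply sin_ge_0. apply Rmult_le_pos; lra. specialize (Hpi m Hm).
  assert (lam * (x - t m) <= lam * (t (S m) - t m)) by (apply Rmult_le_compat_l; lra). lra.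
  apply Rlt_le, Rinv_0_lt_compat; lra. Qed.

Lemma piece_exists x : (0 < n)%nat -> t 0 <= x <= t n ->
  exists m, (m < n)%nat /\ t m <= x <= t (S m).
Proof. intros Hn Hx.
  assert (forall K, (0 < K)%nat -> (K <= n)%nat -> x <= t K -> exists m, (m < K)%nat /\ t m <= x <= t (S m)).
  { induction K; intros HK HKn HxK. lia.
    destruct (Rle_dec x (t K)).
    - destruct (Nat.eq_dec K 0). subst K. exists 0%nat. split. lia. lra.
      destruct (IHK ltac:(lia) ltac:(lia) r) as [m [? ?]]. exists m. split; auto.
    - exists K. split. lia. lra. }
  apply H; auto. lra. Qed.

Lemma trig_repr m alpha beta x : (m < n)%nat -> t m <= x <= t (S m) ->
  let g := fun y => alpha * sin (lam * y) + beta * cos (lam * y) in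
  g x = g (t m) * U m x + g (t (S m)) * W m x.
Proof. intros Hm Hx g. unfold g, U, W. pose proof (Sm_pos m Hm). unfold Sm in *.
  replace (lam * (t (S m) - x)) with (lam * t (S m) - lam * x) by ring.
  replace (lam * (x - t m)) with (lam * x - lam * t m) by ring.
  replace (lam * (t (S m) - t m)) with (lam * t (S m) - lam * t m) by ring.
  rewrite !sin_minus. field. rewrite <- sin_minus.
  replace (lam * t (S m) - lam * t m) with (lam * (t (S m) - t m)) by ring. lra. Qed.

Lemma U_trig m : exists alpha beta, forall y, U m y = alpha * sin (lam * y) + beta * cos (lam * y).
Proof. exists (- cos (lam * t (S m)) / Sm m), (sin (lam * t (S m)) / Sm m). intros y. unfold U.
  replace (lam * (t (S m) - y)) with (lam * t (S m) - lam * y) by ring. rewrite sin_minus.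
  unfold Rdiv. ring. Qed.
Lemma W_trig m : exists alpha beta, forall y, W m y = alpha * sin (lam * y) + beta * cos (lam * y).
Proof. exists (cos (lam * t m) / Sm m), (- sin (lam * t m) / Sm m). intros y. unfold W.
  replace (lam * (y - t m)) with (lam * y - lam * t m) by ring. rewrite sin_minus.
  unfold Rdiv. ring. Qed.

End Sp.

End P2.
Import P2.

Module P3.
Open Scope R_scope.

Lemma int_gen (F f : R -> R) a b v :
  (forall x, is_derive F x (f x)) -> cont f -> F b - F a = v -> RInt f a b = v.
Proof. intros HF Hf Hv. apply is_RInt_unique. rewrite <- Hv.
  apply (is_RInt_derive (V:=R_CompleteNormedModule)). intros; apply HF. intros; apply Hf. Qed.

Ltac contd := intro; apply (ex_derive_continuous (K:=R_AbsRing) (V:=R_NormedModule)); auto_derive; auto.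

Lemma int_uu lam a b : lam <> 0 -> sin (lam*(b-a)) <> 0 ->
  RInt (fun x => (sin(lam*(b-x))/sin(lam*(b-a))) * (sin(lam*(b-x))/sin(lam*(b-a)))) a b
  = Aval (lam*(b-a))/lam.
Proof. intros Hl HS.
  apply int_gen with (F := fun x => - (lam*(b-x)/2 - sin(2*(lam*(b-x)))/4)/(lam*(sin (lam*(b-a)))^2)).
  - intros x. auto_derive. auto.
    replace (b + - x) with (b - x) by ring. rewrite cos_2a_sin. field. split; auto.
  - contd.
  - unfold Aval. replace (lam * (b - b)) with 0 by ring. rewrite Rmult_0_r, sin_0. field. split; auto.
Qed.

Lemma int_ww lam a b : lam <> 0 -> sin (lam*(b-a)) <> 0 ->
  RInt (fun x => (sin(lam*(x-a))/sin(lam*(b-a))) * (sin(lam*(x-a))/sin(lam*(b-a)))) a b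
  = Aval (lam*(b-a))/lam.
Proof. intros Hl HS.
  apply int_gen with (F := fun x => (lam*(x-a)/2 - sin(2*(lam*(x-a)))/4)/(lam*(sin (lam*(b-a)))^2)).
  - intros x. auto_derive. auto.
    replace (x + - a) with (x - a) by ring. rewrite cos_2a_sin. field. split; auto.
  - contd.
  - unfold Aval. replace (lam * (a - a)) with 0 by ring. rewrite Rmult_0_r, sin_0. field. split; auto.
Qed.

Lemma int_uw lam a b : lam <> 0 -> sin (lam*(b-a)) <> 0 ->
  RInt (fun x => (sin(lam*(b-x))/sin(lam*(b-a))) * (sin(lam*(x-a))/sin(lam*(b-a)))) a b
  = Bval (lam*(b-a))/lam.
Proof. intros Hl HS.
  apply int_gen with (F := fun x => (- sin(lam*(a+b-2*x))/(2*lam) - x * cos (lam*(b-a)))/(2*(sin (lam*(b-a)))^2)).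
  - intros x. auto_derive. auto.
    replace (lam * (a + b + - (2 * x))) with (lam*(b-x) - lam*(x-a)) by ring.
    replace (lam * (b - a)) with (lam*(b-x) + lam*(x-a)) by ring.
    rewrite cos_minus, cos_plus. field.
    replace (lam * (b - x) + lam * (x - a)) with (lam*(b-a)) by ring. split; auto.
  - contd.
  - unfold Bval. replace (lam * (a + b - 2 * b)) with (- (lam*(b-a))) by ring.
    replace (lam * (a + b - 2 * a)) with (lam*(b-a)) by ring. rewrite sin_neg. field. split; auto.
Qed.

Lemma int_u lam a b : lam <> 0 -> sin (lam*(b-a)) <> 0 ->
  RInt (fun x => sin(lam*(b-x))/sin(lam*(b-a))) a b = Gval (lam*(b-a))/lam.
Proof. intros Hl HS.
  apply int_gen with (F := fun x => cos (lam*(b-x))/(lam * sin (lam*(b-a)))).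
  - intros x. auto_derive. auto. replace (b + - x) with (b - x) by ring. field. split; auto.
  - contd.
  - unfold Gval. replace (lam * (b - b)) with 0 by ring. rewrite cos_0. field. split; auto.
Qed.

Lemma int_w lam a b : lam <> 0 -> sin (lam*(b-a)) <> 0 ->
  RInt (fun x => sin(lam*(x-a))/sin(lam*(b-a))) a b = Gval (lam*(b-a))/lam.
Proof. intros Hl HS.
  apply int_gen with (F := fun x => - cos (lam*(x-a))/(lam * sin (lam*(b-a)))).
  - intros x. auto_derive. auto. replace (x + - a) with (x - a) by ring. field. split; auto.
  - contd.
  - unfold Gval. replace (lam * (a - a)) with 0 by ring. rewrite cos_0. field. split; auto.
Qed.

End P3.
Import P3.

Module P4.
Open Scope R_scope.

Definition ip (B : R) (g h : R -> R) : R := RInt (fun x => g x * h x) 0 B.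

Fixpoint lcf (ph : nat -> R -> R) (a : nat -> R) (K : nat) (x : R) : R :=
  match K with O => 0 | S K' => lcf ph a K' x + a K' * ph K' x end.

Lemma cont_lcf ph a K : (forall k, cont (ph k)) -> cont (lcf ph a K).
Proof. intros H. induction K; simpl. apply cont_const.
  apply cont_plus; auto. apply cont_mult. apply cont_const. auto. Qed.

Lemma lcf_lin ph a d r K x : lcf ph (fun m => a m + r * d m) K x = lcf ph a K x + r * lcf ph d K x.
Proof. induction K; simpl. ring. rewrite IHK. ring. Qed.

Lemma lcf_ext ph a a' K x : (forall m, (m < K)%nat -> a m = a' m) -> lcf ph a K x = lcf ph a' K x.
Proof. intros H. induction K; simpl. auto. rewrite IHK by (intros; apply H; lia). rewrite H by lia. auto. Qed.

Lemma ip_ext B g1 g2 h1 h2 : (forall x, g1 x = g2 x) -> (forall x, h1 x = h2 x) -> ip B g1 h1 = ip B g2 h2.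
Proof. intros. unfold ip. apply RInt_extR. intros. rewrite H, H0. auto. Qed.

Lemma ip_sym B g h : ip B g h = ip B h g.
Proof. unfold ip. apply RInt_extR. intros; ring. Qed.

Lemma ip_lin_l B g1 g2 h r : cont g1 -> cont g2 -> cont h ->
  ip B (fun x => g1 x + r * g2 x) h = ip B g1 h + r * ip B g2 h.
Proof. intros. unfold ip. rewrite <- RInt_lin by (apply cont_ex_RInt, cont_mult; auto).
  apply RInt_extR. intros; ring. Qed.

Lemma ip_lin_r B g h1 h2 r : cont g -> cont h1 -> cont h2 ->
  ip B g (fun x => h1 x + r * h2 x) = ip B g h1 + r * ip B g h2.
Proof. intros. rewrite ip_sym, ip_lin_l by auto. rewrite (ip_sym B h1), (ip_sym B h2). auto. Qed.

Lemma ip_sub_l B g1 g2 h : cont g1 -> cont g2 -> cont h ->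
  ip B (fun x => g1 x - g2 x) h = ip B g1 h - ip B g2 h.
Proof. intros. rewrite (ip_ext B _ (fun x => g1 x + (-1) * g2 x) h h) by (intros; ring).
  rewrite ip_lin_l by auto. ring. Qed.

Lemma ip_zero_l B h : ip B (fun _ => 0) h = 0.
Proof. unfold ip. rewrite (RInt_extR _ (fun _ => 0)). apply RInt_zero. intros; ring. Qed.

Lemma ip_lcf_r B ph g a K : (forall k, cont (ph k)) -> cont g ->
  ip B g (lcf ph a K) = lcf (fun k x => ip B g (ph k)) a K 0.
Proof. intros Hph Hg. induction K; simpl.
  - unfold ip. rewrite (RInt_extR _ (fun _ => 0)). apply RInt_zero. intros; simpl; ring.
  - rewrite ip_lin_r; auto. rewrite IHK. auto. apply cont_lcf; auto. Qed.

Lemma ip_lcf_zero B ph g a K : (forall k, cont (ph k)) -> cont g ->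
  (forall k, (k < K)%nat -> ip B g (ph k) = 0) -> ip B g (lcf ph a K) = 0.
Proof. intros Hph Hg H. rewrite ip_lcf_r by auto. induction K; simpl. auto.
  rewrite IHK by (intros; apply H; lia). rewrite H by lia. ring. Qed.

Lemma ip_self_nonneg B g : 0 <= B -> cont g -> 0 <= ip B g g.
Proof. intros HB Hg. unfold ip. apply RInt_ge_0; auto. apply cont_ex_RInt, cont_mult; auto.
  intros. apply Rle_0_sqr. Qed.

Lemma CS0 B g h : 0 <= B -> cont g -> cont h -> ip B h h = 0 -> ip B g h = 0.
Proof. intros HB Hg Hh H0.
  assert (Hq : forall r, 0 <= ip B g g + 2 * r * ip B g h).
  { intros r. pose proof (ip_self_nonneg B (fun x => g x + r * h x) HB).
    rewrite ip_lin_l in H by (auto; apply cont_plus; auto; apply cont_mult; auto; apply cont_const).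
    rewrite !ip_lin_r in H by auto. rewrite H0, (ip_sym B h g) in H.
    assert (cont (fun x => g x + r * h x)) by (apply cont_plus; auto; apply cont_mult; auto; apply cont_const).
    specialize (H H1). lra. }
  destruct (Req_dec (ip B g h) 0) as [E|E]; auto.
  specialize (Hq (- (ip B g g + 1) / (2 * ip B g h))).
  replace (2 * (- (ip B g g + 1) / (2 * ip B g h)) * ip B g h) with (- (ip B g g + 1)) in Hq by (field; auto).
  lra. Qed.

Lemma GS B ph : 0 <= B -> (forall k, cont (ph k)) ->
  forall K f, cont f -> exists c, forall k, (k < K)%nat -> ip B f (ph k) = ip B (lcf ph c K) (ph k).
Proof. intros HB Hph K. induction K; intros f Hf.
  - exists (fun _ => 0). intros; lia.
  - destruct (IHK f Hf) as [c Hc]. destruct (IHK (ph K) (Hph K)) as [d Hd].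
    set (r := fun x => ph K x - lcf ph d K x).
    assert (Hr : cont r) by (apply cont_minus; auto; apply cont_lcf; auto).
    set (h := fun x => f x - lcf ph c K x).
    assert (Hh : cont h) by (apply cont_minus; auto; apply cont_lcf; auto).
    set (Q := ip B r r). set (P := ip B h r).
    set (al := if Req_EM_T Q 0 then 0 else P / Q).
    assert (HPQ : P - al * Q = 0).
    { unfold al. destruct (Req_EM_T Q 0) as [E|E]. unfold P. rewrite CS0; auto. ring.
      field. auto. }
    exists (fun m => if Nat.ltb m K then c m + (- al) * d m else al).
    assert (Hl : forall x, lcf ph (fun m => if Nat.ltb m K then c m + (- al) * d m else al) (S K) x
                          = lcf ph c K x + al * r x).
    { intros x. simpl. rewrite Nat.ltb_irrefl.
      rewrite (lcf_ext ph _ (fun m => c m + (- al) * d m)).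
      rewrite lcf_lin. unfold r. ring.
      intros m Hm. rewrite (proj2 (Nat.ltb_lt m K) Hm). auto. }
    assert (Hrk : forall k, (k < K)%nat -> ip B r (ph k) = 0).
    { intros k Hk. unfold r. rewrite ip_sub_l; auto. rewrite Hd by auto. ring. apply cont_lcf; auto. }
    assert (Hhk : forall k, (k < K)%nat -> ip B h (ph k) = 0).
    { intros k Hk. unfold h. rewrite ip_sub_l; auto. rewrite Hc by auto. ring. apply cont_lcf; auto. }
    intros k Hk.
    rewrite (ip_ext B _ (fun x => lcf ph c K x + al * r x) (ph k) (ph k) Hl (fun x => eq_refl)).
    rewrite ip_lin_l; auto. 2: apply cont_lcf; auto.
    destruct (Nat.eq_dec k K) as [->|Hne].
    + assert (Eph : forall x, ph K x = r x + 1 * lcf ph d K x) by (intros; unfold r; ring).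
      assert (E1 : ip B h (ph K) = P).
      { rewrite (ip_ext B h h _ _ (fun x => eq_refl) Eph). rewrite ip_lin_r; auto.
        rewrite ip_lcf_zero; auto. unfold P. ring. apply cont_lcf; auto. }
      assert (E2 : ip B r (ph K) = Q).
      { rewrite (ip_ext B r r _ _ (fun x => eq_refl) Eph). rewrite ip_lin_r; auto.
        rewrite ip_lcf_zero; auto. unfold Q. ring. apply cont_lcf; auto. }
      unfold h in E1. rewrite ip_sub_l in E1; auto. 2: apply cont_lcf; auto.
      rewrite E2. lra.
    + rewrite Hrk by lia. rewrite Hc by lia. ring.
Qed.

End P4.
Import P4.

Module P5.
Open Scope R_scope.

Lemma cont_cont_on a b g : cont g -> cont_on a b g.
Proof. intros Hg x _. eapply filterlim_filter_le_1. apply filter_le_within. apply Hg. Qed.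

Lemma cont_on_ext a b f : a <= b -> cont_on a b f -> cont (fun x => f (clamp a b x)).
Proof. intros Hab Hf x. unfold continuous.
  apply (filterlim_comp _ _ _ (clamp a b) f (locally x) (within (in_seg a b) (locally (clamp a b x)))).
  - intros P HP. unfold within in HP. unfold filtermap.
    pose proof (cont_clamp a b x _ HP) as H. unfold filtermap in H.
    eapply filter_imp; [|exact H]. intros y Hy. apply Hy. unfold in_seg. apply clamp_in; auto.
  - apply Hf. unfold in_seg. apply clamp_in; auto.
Qed.

Section Sp.
Variable lam : R.
Variable n : nat.
Variable t : nat -> R.
Hypothesis Hlam : 0 < lam.
Hypothesis Hinc : forall i, (i < n)%nat -> t i < t (S i).
Hypothesis Hpi : forall i, (i < n)%nat -> lam * (t (S i) - t i) < PI.

Notation phi := (phi lam n t).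
Notation U := (U lam t).
Notation W := (W lam t).

Lemma spline_phi a b k : (k <= n)%nat -> trig_spline lam a b n t (phi k).
Proof. intros Hk. split. apply cont_cont_on, cont_phi.
  intros i Hi. destruct (U_trig lam t i) as [a1 [b1 HU]]. destruct (W_trig lam t i) as [a2 [b2 HW]].
  exists ((if Nat.eqb k i then a1 else 0) + (if Nat.eqb k (S i) then a2 else 0)),
         ((if Nat.eqb k i then b1 else 0) + (if Nat.eqb k (S i) then b2 else 0)).
  intros x Hx. rewrite (phi_piece lam n t Hlam Hinc Hpi i k x) by auto. rewrite HU, HW.
  destruct (Nat.eqb k i); destruct (Nat.eqb k (S i)); ring.
Qed.

Lemma spline_lin a b s1 s2 r : trig_spline lam a b n t s1 -> trig_spline lam a b n t s2 ->
  trig_spline lam a b n t (fun x => s1 x + r * s2 x).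
Proof. intros [C1 P1] [C2 P2]. split.
  - intros x Hx. specialize (C1 x Hx). specialize (C2 x Hx).
    apply (filterlim_comp_2 (F:=within (in_seg a b) (locally x)) (G:=locally (s1 x)) (H:=locally (r * s2 x)) s1 (fun y => r * s2 y) Rplus).
    auto. apply (filterlim_comp _ _ _ s2 (fun z => r * z) _ (locally (s2 x))). auto.
    apply (continuous_mult (fun _ => r) (fun z => z)). apply continuous_const. apply continuous_id.
    apply (filterlim_plus (K:=R_AbsRing) (V:=R_NormedModule)).
  - intros i Hi. destruct (P1 i Hi) as [a1 [b1 H1]]. destruct (P2 i Hi) as [a2 [b2 H2]].
    exists (a1 + r * a2), (b1 + r * b2). intros x Hx. rewrite H1, H2 by auto. ring.
Qed.

Lemma spline_lcf a b c K : (K <= S n)%nat -> trig_spline lam a b n t (lcf phi c K).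
Proof. induction K; intros HK; simpl.
  - split. apply cont_cont_on, cont_const. intros i Hi. exists 0, 0. intros; ring.
  - apply spline_lin. apply IHK; lia. apply spline_phi; lia.
Qed.

Lemma lcf_piece m a x K : (m < n)%nat -> t m <= x <= t (S m) -> (K <= S n)%nat ->
  lcf phi a K x = (if Nat.ltb m K then a m * U m x else 0) + (if Nat.ltb (S m) K then a (S m) * W m x else 0).
Proof. intros Hm Hx. induction K; intros HK; simpl. ring.
  rewrite IHK by lia. rewrite (phi_piece lam n t Hlam Hinc Hpi m K x) by (auto; lia).
  destruct (Nat.ltb_spec m K); destruct (Nat.ltb_spec m (S K));
  destruct (Nat.ltb_spec (S m) K); destruct (Nat.ltb_spec (S m) (S K));
  destruct (Nat.eqb_spec K m); destruct (Nat.eqb_spec K (S m)); try lia; subst; ring.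
Qed.

Lemma spline_repr s : trig_spline lam (t 0) (t n) n t s -> (0 < n)%nat ->
  forall x, t 0 <= x <= t n -> s x = lcf phi (fun k => s (t k)) (S n) x.
Proof. intros [_ Hs] Hn x Hx. destruct (piece_exists n t x Hn Hx) as [m [Hm Hxm]].
  rewrite (lcf_piece m) by (auto; lia).
  rewrite (proj2 (Nat.ltb_lt m (S n))) by lia. rewrite (proj2 (Nat.ltb_lt (S m) (S n))) by lia.
  destruct (Hs m Hm) as [al [be Hab]].
  rewrite !Hab by (auto; lra).
  apply (trig_repr lam n t Hlam Hinc Hpi m al be x Hm Hxm).
Qed.

End Sp.

End P5.
Import P5.

Module P6.
Open Scope R_scope.

Lemma RInt_pointR (f : R -> R) a : RInt f a a = 0.
Proof. apply (RInt_point (V:=R_CompleteNormedModule)). Qed.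

Lemma sup_bound f a b : a <= b -> cont_on a b f -> forall x, a <= x <= b -> Rabs (f x) <= sup_norm a b f.
Proof. intros Hab Hf.
  assert (Hc : cont (fun x => Rabs (f (clamp a b x)))).
  { apply (cont_comp _ Rabs). apply cont_on_ext; auto. intro; apply continuous_Rabs. }
  destruct (continuity_ab_maj (fun x => Rabs (f (clamp a b x))) a b Hab) as [Mx [HM HMx]].
  { intros c _. apply continuity_pt_filterlim. apply Hc. }
  set (E := fun y => exists x, in_seg a b x /\ y = Rabs (f x)).
  assert (HE : forall x, a <= x <= b -> Rabs (f x) <= Rabs (f (clamp a b Mx))).
  { intros x Hx. specialize (HM x Hx). rewrite clamp_mid in HM by auto. auto. }
  intros x Hx. unfold sup_norm. fold E.
  destruct (Lub_Rbar_correct E) as [Hub Hlub].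
  assert (H1 : Rbar_le (Lub_Rbar E) (Rabs (f (clamp a b Mx)))).
  { apply Hlub. intros y [z [Hz ->]]. simpl. apply HE. auto. }
  assert (H2 : Rbar_le (Rabs (f x)) (Lub_Rbar E)).
  { apply Hub. exists x. split; auto. }
  destruct (Lub_Rbar E); simpl in *; tauto.
Qed.

Section Sp.
Variable lam : R.
Variable n : nat.
Variable t : nat -> R.
Hypothesis Hlam : 0 < lam.
Hypothesis Hinc : forall i, (i < n)%nat -> t i < t (S i).
Hypothesis Hpi : forall i, (i < n)%nat -> lam * (t (S i) - t i) < PI.

Notation phi := (phi lam n t).
Notation U := (U lam t).
Notation W := (W lam t).

Lemma t_lt_idx m i : (m <= n)%nat -> (i <= n)%nat -> t m < t i -> (m < i)%nat.
Proof. intros Hm Hi H. destruct (Nat.lt_ge_cases m i); auto.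
  assert (t i <= t m) by (apply (tmono n t Hinc); auto). lra. Qed.

Lemma tle i k : (i <= k)%nat -> (k <= n)%nat -> t i <= t k.
Proof. apply (tmono n t Hinc). Qed.

Lemma split_int F k : cont F -> (0 < n)%nat -> (k <= n)%nat ->
  RInt (fun x => F x * phi k x) (t 0) (t n) =
  (if Nat.eqb k 0 then 0 else RInt (fun x => F x * W (k-1) x) (t (k-1)) (t k)) +
  (if Nat.ltb k n then RInt (fun x => F x * U k x) (t k) (t (S k)) else 0).
Proof. intros HF Hn Hk.
  set (G := fun x => F x * phi k x).
  assert (HG : cont G) by (apply cont_mult; auto; apply cont_phi).
  set (lo := t (k-1)). set (hi := if Nat.ltb k n then t (S k) else t k).
  assert (H0lo : t 0 <= lo) by (apply tle; lia).
  assert (Hlok : lo <= t k) by (apply tle; lia).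
  assert (Hkhi : t k <= hi /\ hi <= t n).
  { unfold hi. destruct (Nat.ltb_spec k n). split; apply tle; lia. split; apply tle; lia. }
  rewrite <- (RInt_Chasles' G (t 0) lo (t n)) by (apply cont_ex_RInt; auto).
  rewrite <- (RInt_Chasles' G lo (t k) (t n)) by (apply cont_ex_RInt; auto).
  rewrite <- (RInt_Chasles' G (t k) hi (t n)) by (apply cont_ex_RInt; auto).
  assert (Z1 : RInt G (t 0) lo = 0).
  { rewrite (RInt_extR _ (fun _ => 0)). apply RInt_zero.
    intros x Hx. rewrite Rmin_left, Rmax_right in Hx by lra.
    destruct (piece_exists n t x Hn) as [m [Hm Hxm]]. split. lra. lra.
    assert (m < k - 1)%nat by (apply t_lt_idx; try lia; fold lo; lra).
    unfold G. rewrite (phi_piece lam n t Hlam Hinc Hpi m k x) by (auto; lra).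
    rewrite (proj2 (Nat.eqb_neq k m)) by lia. rewrite (proj2 (Nat.eqb_neq k (S m))) by lia. ring. }
  assert (Z2 : RInt G lo (t k) = if Nat.eqb k 0 then 0 else RInt (fun x => F x * W (k-1) x) (t (k-1)) (t k)).
  { destruct (Nat.eqb_spec k 0).
    - subst k. unfold lo. simpl. apply RInt_pointR.
    - apply RInt_extR. intros x Hx. unfold lo in *. rewrite Rmin_left, Rmax_right in Hx by lra.
      unfold G. assert (Hk1 : t (k-1) <= x <= t (S (k-1))).
      { replace (S (k-1)) with k by lia. lra. }
      rewrite (phi_piece lam n t Hlam Hinc Hpi (k-1) k x) by (auto; lia).
      rewrite (proj2 (Nat.eqb_neq k (k-1))) by lia. rewrite (proj2 (Nat.eqb_eq k (S (k-1)))) by lia. ring. }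
  assert (Z3 : RInt G (t k) hi = if Nat.ltb k n then RInt (fun x => F x * U k x) (t k) (t (S k)) else 0).
  { unfold hi. destruct (Nat.ltb_spec k n).
    - apply RInt_extR. intros x Hx. rewrite Rmin_left, Rmax_right in Hx by (apply Rlt_le, Hinc; auto).
      unfold G. rewrite (phi_piece lam n t Hlam Hinc Hpi k k x) by (auto; lra).
      rewrite Nat.eqb_refl. rewrite (proj2 (Nat.eqb_neq k (S k))) by lia. ring.
    - apply RInt_pointR. }
  assert (Z4 : RInt G hi (t n) = 0).
  { rewrite (RInt_extR _ (fun _ => 0)). apply RInt_zero.
    intros x Hx. rewrite Rmin_left, Rmax_right in Hx by lra.
    unfold hi in Hx. destruct (Nat.ltb_spec k n).
    - destruct (piece_exists n t x Hn) as [m [Hm Hxm]]. split. assert (t 0 <= t (S k)) by (apply tle; lia). lra. lra.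
      assert (S k < S m)%nat by (apply t_lt_idx; try lia; lra).
      unfold G. rewrite (phi_piece lam n t Hlam Hinc Hpi m k x) by (auto; lra).
      rewrite (proj2 (Nat.eqb_neq k m)) by lia. rewrite (proj2 (Nat.eqb_neq k (S m))) by lia. ring.
    - replace k with n in Hx by lia. lra. }
  rewrite Z1, Z2, Z3, Z4. unfold lo. destruct (k =? 0); destruct (k <? n); lra.
Qed.

Lemma piece_U P c0 c1 m : (m < n)%nat ->
  (forall x, t m <= x <= t (S m) -> P x = c0 * U m x + c1 * W m x) ->
  RInt (fun x => P x * U m x) (t m) (t (S m)) =
  (c0 * Aval (lam * (t (S m) - t m)) + c1 * Bval (lam * (t (S m) - t m))) / lam.
Proof. intros Hm HP. pose proof (Sm_pos lam n t Hlam Hinc Hpi m Hm) as HS.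
  assert (Hm' : t m < t (S m)) by auto.
  rewrite (RInt_extR _ (fun x => c0 * (U m x * U m x) + c1 * (U m x * W m x))).
  2: { intros x Hx. rewrite Rmin_left, Rmax_right in Hx by lra. rewrite HP by lra. ring. }
  rewrite RInt_lin, RInt_scal'.
  2: apply cont_ex_RInt, cont_mult; apply cont_U.
  2: apply cont_ex_RInt, cont_mult; [apply cont_const | apply cont_mult; apply cont_U].
  2: apply cont_ex_RInt, cont_mult; [apply cont_U | apply cont_W].
  unfold U, W, Sm in *. rewrite int_uu, int_uw by lra. Req. field. lra. Qed.

Lemma piece_W P c0 c1 m : (m < n)%nat ->
  (forall x, t m <= x <= t (S m) -> P x = c0 * U m x + c1 * W m x) ->
  RInt (fun x => P x * W m x) (t m) (t (S m)) =
  (c0 * Bval (lam * (t (S m) - t m)) + c1 * Aval (lam * (t (S m) - t m))) / lam.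
Proof. intros Hm HP. pose proof (Sm_pos lam n t Hlam Hinc Hpi m Hm) as HS.
  assert (Hm' : t m < t (S m)) by auto.
  rewrite (RInt_extR _ (fun x => c0 * (U m x * W m x) + c1 * (W m x * W m x))).
  2: { intros x Hx. rewrite Rmin_left, Rmax_right in Hx by lra. rewrite HP by lra. ring. }
  rewrite RInt_lin, RInt_scal'.
  2: apply cont_ex_RInt, cont_mult; [apply cont_U | apply cont_W].
  2: apply cont_ex_RInt, cont_mult; [apply cont_const | apply cont_mult; apply cont_U || apply cont_W].
  2: apply cont_ex_RInt, cont_mult; apply cont_W.
  unfold U, W, Sm in *. rewrite int_ww, int_uw by lra. Req. field. lra. Qed.

Lemma bound_W F N m : (m < n)%nat -> cont F -> (forall x, t m <= x <= t (S m) -> Rabs (F x) <= N) ->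
  Rabs (RInt (fun x => F x * W m x) (t m) (t (S m))) <= N * Gval (lam * (t (S m) - t m)) / lam.
Proof. intros Hm HF HN. pose proof (Sm_pos lam n t Hlam Hinc Hpi m Hm) as HS.
  assert (Hm' : t m < t (S m)) by auto.
  eapply Rle_trans. apply abs_RInt_le. lra. apply cont_ex_RInt, cont_mult; auto; apply cont_W.
  eapply Rle_trans. apply (RInt_le _ (fun x => N * W m x)). lra.
  apply cont_ex_RInt, (cont_comp _ Rabs). apply cont_mult; auto; apply cont_W. intro; apply continuous_Rabs.
  apply cont_ex_RInt, cont_mult. apply cont_const. apply cont_W.
  intros x Hx. rewrite Rabs_mult. rewrite (Rabs_pos_eq (W m x)) by (apply (W_nonneg lam n t Hlam Hinc Hpi); auto; lra).
  apply Rmult_le_compat_r. apply (W_nonneg lam n t Hlam Hinc Hpi); auto; lra. apply HN; lra.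
  rewrite RInt_scal' by (apply cont_ex_RInt, cont_W). unfold W, Sm in *. rewrite int_w by lra.
  right. unfold Rdiv. ring. Qed.

Lemma bound_U F N m : (m < n)%nat -> cont F -> (forall x, t m <= x <= t (S m) -> Rabs (F x) <= N) ->
  Rabs (RInt (fun x => F x * U m x) (t m) (t (S m))) <= N * Gval (lam * (t (S m) - t m)) / lam.
Proof. intros Hm HF HN. pose proof (Sm_pos lam n t Hlam Hinc Hpi m Hm) as HS.
  assert (Hm' : t m < t (S m)) by auto.
  eapply Rle_trans. apply abs_RInt_le. lra. apply cont_ex_RInt, cont_mult; auto; apply cont_U.
  eapply Rle_trans. apply (RInt_le _ (fun x => N * U m x)). lra.
  apply cont_ex_RInt, (cont_comp _ Rabs). apply cont_mult; auto; apply cont_U. intro; apply continuous_Rabs.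
  apply cont_ex_RInt, cont_mult. apply cont_const. apply cont_U.
  intros x Hx. rewrite Rabs_mult. rewrite (Rabs_pos_eq (U m x)) by (apply (U_nonneg lam n t Hlam Hinc Hpi); auto; lra).
  apply Rmult_le_compat_r. apply (U_nonneg lam n t Hlam Hinc Hpi); auto; lra. apply HN; lra.
  rewrite RInt_scal' by (apply cont_ex_RInt, cont_U). unfold U, Sm in *. rewrite int_u by lra.
  right. unfold Rdiv. ring. Qed.

Lemma bound_UW F N m : (m < n)%nat -> cont F -> (forall x, t m <= x <= t (S m) -> Rabs (F x) <= N) ->
  (forall x, t m <= x <= t (S m) -> Rabs (U m x - W m x) <= 2) ->
  Rabs (RInt (fun x => F x * U m x) (t m) (t (S m)) - RInt (fun x => F x * W m x) (t m) (t (S m)))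
   <= 2 * N * (t (S m) - t m).
Proof. intros Hm HF HN HUW.
  assert (Hm' : t m < t (S m)) by auto.
  rewrite <- RInt_sub by (apply cont_ex_RInt, cont_mult; auto; apply cont_U || apply cont_W).
  eapply Rle_trans. apply abs_RInt_le. lra.
  apply cont_ex_RInt, cont_minus; apply cont_mult; auto; apply cont_U || apply cont_W.
  eapply Rle_trans. apply (RInt_le _ (fun x => 2 * N)). lra.
  apply cont_ex_RInt, (cont_comp _ Rabs). apply cont_minus; apply cont_mult; auto; apply cont_U || apply cont_W.
  intro; apply continuous_Rabs. apply cont_ex_RInt, cont_const.
  intros x Hx. replace (F x * U m x - F x * W m x) with (F x * (U m x - W m x)) by ring.
  rewrite Rabs_mult. assert (0 <= Rabs (F x)) by apply Rabs_pos.
  assert (Rabs (F x) <= N) by (apply HN; lra). assert (Rabs (U m x - W m x) <= 2) by (apply HUW; lra).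
  assert (0 <= Rabs (U m x - W m x)) by apply Rabs_pos. nra.
  rewrite RInt_const. unfold scal; simpl; unfold mult; simpl. right; ring. Qed.

End Sp.

End P6.
Import P6.

Module P7.
Open Scope R_scope.

Lemma prod_lb ci c b : Rabs c <= Rabs ci -> 0 <= b -> - (ci * ci * b) <= ci * c * b.
Proof. intros H Hb. assert (Rabs (ci * c) <= ci * ci).
  { rewrite Rabs_mult. replace (ci * ci) with (Rabs ci * Rabs ci).
    apply Rmult_le_compat_l; auto. apply Rabs_pos.
    rewrite <- Rabs_mult. apply Rabs_pos_eq. nra. }
  assert (- (ci * ci) <= ci * c). { revert H0. unfold Rabs at 1. destruct (Rcase_abs (ci*c)); lra. }
  nra. Qed.

Lemma algA ci cl cr aL bL gL aR bR gR dL dR N X :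
  (dL = 0 \/ dL = 1) -> (dR = 0 \/ dR = 1) -> (dL = 1 \/ dR = 1) ->
  (dL = 1 -> Rabs cl <= Rabs ci /\ 0 <= bL /\ gL / 4 <= aL - bL /\ 0 < gL) ->
  (dR = 1 -> Rabs cr <= Rabs ci /\ 0 <= bR /\ gR / 4 <= aR - bR /\ 0 < gR) ->
  0 <= N ->
  X = dL * (cl * bL + ci * aL) + dR * (ci * aR + cr * bR) ->
  Rabs X <= N * (dL * gL + dR * gR) -> Rabs ci <= 4 * N.
Proof. intros HdL HdR Hd HL HR HN HX HXN.
  set (D := dL * (aL - bL) + dR * (aR - bR)).
  set (G := dL * gL + dR * gR).
  assert (HDG : 0 < D /\ G <= 4 * D /\ ci * ci * D <= ci * X).
  { unfold D, G. rewrite HX.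
    destruct HdL as [-> | ->]; destruct HdR as [-> | ->].
    - destruct Hd; lra.
    - destruct (HR eq_refl) as [Hr [HbR [HaR HgR]]]. pose proof (prod_lb ci cr bR Hr HbR). split; [lra|split; nra].
    - destruct (HL eq_refl) as [Hl [HbL [HaL HgL]]]. pose proof (prod_lb ci cl bL Hl HbL). split; [lra|split; nra].
    - destruct (HR eq_refl) as [Hr [HbR [HaR HgR]]]. pose proof (prod_lb ci cr bR Hr HbR).
      destruct (HL eq_refl) as [Hl [HbL [HaL HgL]]]. pose proof (prod_lb ci cl bL Hl HbL). split; [lra|split; nra]. }
  destruct HDG as [HD [HG H1]]. fold G in HXN.
  assert (H2 : ci * X <= Rabs ci * Rabs X).
  { rewrite <- Rabs_mult. apply Rle_abs. }
  assert (H3 : Rabs ci * Rabs X <= Rabs ci * (N * (4 * D))).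
  { apply Rmult_le_compat_l. apply Rabs_pos. eapply Rle_trans. apply HXN. apply Rmult_le_compat_l; lra. }
  assert (Hsq : ci * ci = Rabs ci * Rabs ci).
  { rewrite <- Rabs_mult. symmetry. apply Rabs_pos_eq. nra. }
  assert (Rabs ci * Rabs ci * D <= Rabs ci * (4 * N) * D) by nra.
  assert (Rabs ci * Rabs ci <= Rabs ci * (4 * N)).
  { apply (Rmult_le_reg_r D); auto. }
  pose proof (Rabs_pos ci). nra.
Qed.

Lemma absb x y : Rabs x <= y -> - y <= x <= y.
Proof. unfold Rabs. destruct (Rcase_abs x); lra. Qed.
Lemma absi x y : - y <= x <= y -> Rabs x <= y.
Proof. unfold Rabs. destruct (Rcase_abs x); lra. Qed.

Lemma comb_b c1 c2 a b M : Rabs c1 <= M -> Rabs c2 <= M -> 0 <= a -> 0 <= b ->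
  Rabs (c1 * b + c2 * a) <= M * (a + b).
Proof. intros H1 H2 Ha Hb. apply absb in H1. apply absb in H2. apply absi. split; nra. Qed.

Lemma div_b x D R K : 0 < D -> x * D = R -> Rabs R <= K -> Rabs x * D <= K.
Proof. intros HD Hx HR. rewrite <- (Rabs_pos_eq D) by lra. rewrite <- Rabs_mult. rewrite Hx. auto. Qed.

Lemma algB cj cj1 cl cr M N aB bB aL bL aR bR s e P dL dR FL FR FBU FBW :
  (dL = 0 \/ dL = 1) -> (dR = 0 \/ dR = 1) ->
  (dL = 1 -> Rabs cl <= M /\ 0 <= bL /\ 0 <= aL /\ aL + bL <= e /\ Rabs FL <= N * e) ->
  (dR = 1 -> Rabs cr <= M /\ 0 <= bR /\ 0 <= aR /\ aR + bR <= e /\ Rabs FR <= N * e) ->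
  Rabs cj <= M -> Rabs cj1 <= M -> (M = Rabs cj \/ M = Rabs cj1) ->
  dL * (cl * bL + cj * aL) + (cj * aB + cj1 * bB) = dL * FL + FBU ->
  (cj * bB + cj1 * aB) + dR * (cj1 * aR + cr * bR) = FBW + dR * FR ->
  Rabs (FBU - FBW) <= 2 * N * P ->
  Rabs FBU <= N * (2 / s) -> Rabs FBW <= N * (2 / s) ->
  1/2 <= aB - bB -> 2 / s^2 <= aB + bB ->
  0 < s <= e -> e <= 1/50 -> P <= 4 -> 0 <= N -> M <= 9 * N.
Proof. intros HdL HdR HLc HRc Hj Hj1 HM E1 E2 HFd HFU HFW HD HS Hs He HP HN.
  assert (HM0 : 0 <= M) by (eapply Rle_trans; [apply Rabs_pos|exact Hj]).
  assert (0 <= M * e) by (apply Rmult_le_pos; lra).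
  assert (0 <= N * e) by (apply Rmult_le_pos; lra).
  assert (HEL' : Rabs (dL * (cl * bL + cj * aL)) <= M * e).
  { destruct HdL as [-> | ->]. rewrite Rmult_0_l, Rabs_R0. lra.
    destruct (HLc eq_refl) as [Hl [HbL [HaL [HeL _]]]].
    pose proof (comb_b cl cj aL bL M Hl Hj HaL HbL) as HEL.
    assert (M * (aL + bL) <= M * e) by (apply Rmult_le_compat_l; lra).
    rewrite Rmult_1_l. lra. }
  assert (HER' : Rabs (dR * (cj1 * aR + cr * bR)) <= M * e).
  { destruct HdR as [-> | ->]. rewrite Rmult_0_l, Rabs_R0. lra.
    destruct (HRc eq_refl) as [Hr [HbR [HaR [HeR _]]]].
    pose proof (comb_b cr cj1 aR bR M Hr Hj1 HaR HbR) as HER. rewrite Rplus_comm in HER.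
    assert (M * (aR + bR) <= M * e) by (apply Rmult_le_compat_l; lra).
    rewrite Rmult_1_l. lra. }
  assert (HFL' : Rabs (dL * FL) <= N * e).
  { destruct HdL as [-> | ->]. rewrite Rmult_0_l, Rabs_R0. lra.
    rewrite Rmult_1_l. apply HLc; auto. }
  assert (HFR' : Rabs (dR * FR) <= N * e).
  { destruct HdR as [-> | ->]. rewrite Rmult_0_l, Rabs_R0. lra.
    rewrite Rmult_1_l. apply HRc; auto. }
  assert (Hd : (cj - cj1) * (aB - bB) = dL * FL - dR * FR + (FBU - FBW) - dL * (cl * bL + cj * aL) + dR * (cj1 * aR + cr * bR)) by lra.
  assert (Hsg : (cj + cj1) * (aB + bB) = dL * FL + dR * FR + FBU + FBW - dL * (cl * bL + cj * aL) - dR * (cj1 * aR + cr * bR)) by lra.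
  apply absb in HEL'. apply absb in HER'. apply absb in HFL'. apply absb in HFR'.
  apply absb in HFd. apply absb in HFU. apply absb in HFW.
  assert (Hdb : Rabs (cj - cj1) * (aB - bB) <= 2 * N * e + 2 * N * P + 2 * M * e).
  { apply (div_b _ (aB - bB) _ _ ltac:(lra) Hd). apply absi. split; lra. }
  assert (Hsb : Rabs (cj + cj1) * (aB + bB) <= 2 * N * e + 2 * (N * (2 / s)) + 2 * M * e).
  { assert (0 < aB + bB). { assert (0 < 2 / s^2). apply Rdiv_lt_0_compat. lra. apply pow_lt; lra. lra. }
    apply (div_b _ (aB + bB) _ _ ltac:(lra) Hsg). apply absi. split; lra. }
  assert (Hdel : Rabs (cj - cj1) <= 4 * N * e + 4 * N * P + 4 * M * e).
  { assert (Rabs (cj - cj1) * (1/2) <= Rabs (cj - cj1) * (aB - bB)) by (apply Rmult_le_compat_l; [apply Rabs_pos|lra]).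
    lra. }
  assert (Hsig : Rabs (cj + cj1) <= 3 * N * e + M * e).
  { pose proof (Rabs_pos (cj + cj1)) as Hp0.
    assert (H1 : Rabs (cj + cj1) * (2 / s^2) <= 2 * N * e + 2 * (N * (2 / s)) + 2 * M * e).
    { eapply Rle_trans; [|exact Hsb]. apply Rmult_le_compat_l; auto. }
    assert (H2 : Rabs (cj + cj1) <= (N * e + 2 * N / s + M * e) * s^2).
    { apply (Rmult_le_reg_r (2 / s^2)). apply Rdiv_lt_0_compat. lra. apply pow_lt; lra.
      replace ((N * e + 2 * N / s + M * e) * s ^ 2 * (2 / s ^ 2)) with (2 * N * e + 2 * (N * (2 / s)) + 2 * M * e).
      auto. field. lra. }
    replace ((N * e + 2 * N / s + M * e) * s^2) with (N * e * s^2 + 2 * N * s + M * e * s^2) in H2 by (field; lra).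
    assert (s^2 <= 1) by (simpl; clear -Hs He; nra).
    assert (N * e * s^2 <= N * e * 1) by (apply Rmult_le_compat_l; lra).
    assert (M * e * s^2 <= M * e * 1) by (apply Rmult_le_compat_l; lra).
    assert (N * s <= N * e) by (apply Rmult_le_compat_l; lra).
    lra. }
  assert (HM2 : 2 * M <= Rabs (cj + cj1) + Rabs (cj - cj1)).
  { destruct HM as [-> | ->].
    - replace (2 * Rabs cj) with (Rabs ((cj + cj1) + (cj - cj1))).
      apply Rabs_triang. replace (cj + cj1 + (cj - cj1)) with (2 * cj) by ring.
      rewrite Rabs_mult, Rabs_pos_eq by lra. auto.
    - replace (2 * Rabs cj1) with (Rabs ((cj + cj1) - (cj - cj1))).
      eapply Rle_trans. apply Rabs_triang. rewrite Rabs_Ropp. lra.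
      replace (cj + cj1 - (cj - cj1)) with (2 * cj1) by ring.
      rewrite Rabs_mult, Rabs_pos_eq by lra. auto. }
  assert (HMe : M * (2 - 5 * e) <= N * (7 * e + 4 * P)) by lra.
  assert (N * (7 * e + 4 * P) <= N * (9 * (2 - 5 * e))).
  { apply Rmult_le_compat_l; lra. }
  assert (M * (2 - 5 * e) <= 9 * N * (2 - 5 * e)) by lra.
  apply (Rmult_le_reg_r (2 - 5 * e)); lra.
Qed.

End P7.
Import P7.

Module P8.
Open Scope R_scope.

Lemma argmax (a : nat -> R) n : exists i, (i <= n)%nat /\ forall k, (k <= n)%nat -> a k <= a i.
Proof. induction n. exists 0%nat. split. lia. intros k Hk. replace k with 0%nat by lia. lra.
  destruct IHn as [i [Hi H]]. destruct (Rle_dec (a i) (a (S n))).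
  - exists (S n). split. lia. intros k Hk. destruct (Nat.eq_dec k (S n)). subst; lra.
    specialize (H k ltac:(lia)). lra.
  - exists i. split. lia. intros k Hk. destruct (Nat.eq_dec k (S n)). subst; lra. apply H; lia. Qed.

Lemma lcf_ext_ph (X Y : nat -> R -> R) a K x : (forall k, (k < K)%nat -> X k x = Y k x) ->
  lcf X a K x = lcf Y a K x.
Proof. induction K; simpl; intros; auto. rewrite IHK by (intros; apply H; lia). rewrite H by lia. auto. Qed.

Lemma UW_bound p q H : p + q = H -> 0 < H < PI -> 1/2 <= sin (H/2) -> Rabs ((sin p - sin q) / sin H) <= 2.
Proof. intros Hpq HH Hs. rewrite form4. rewrite Hpq.
  replace (sin H) with (2 * sin (H/2) * cos (H/2)) by (rewrite <- sin_2a; f_equal; field).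
  assert (0 < cos (H/2)) by (apply cos_gt_0; lra).
  replace (2 * cos (H / 2) * sin ((p - q) / 2) / (2 * sin (H / 2) * cos (H / 2)))
    with (sin ((p - q) / 2) / sin (H/2)) by (field; lra).
  pose proof (SIN_bound ((p - q) / 2)).
  remember (sin ((p - q) / 2)) as a. remember (sin (H/2)) as b.
  unfold Rdiv. rewrite Rabs_mult. rewrite (Rabs_pos_eq (/ b)) by (apply Rlt_le, Rinv_0_lt_compat; lra).
  assert (Rabs a <= 1) by (unfold Rabs; destruct Rcase_abs; lra).
  assert (/ b <= 2).
  { replace 2 with (/ (1/2)) by field. apply Rinv_le_contravar; lra. }
  assert (0 <= / b) by (apply Rlt_le, Rinv_0_lt_compat; lra).
  pose proof (Rabs_pos a). nra. Qed.

Section Sp.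
Variable lam : R.
Variable n : nat.
Variable t : nat -> R.
Hypothesis Hlam : 0 < lam.
Hypothesis Hinc : forall i, (i < n)%nat -> t i < t (S i).
Hypothesis Hpi : forall i, (i < n)%nat -> lam * (t (S i) - t i) < PI.

Notation phi := (phi lam n t).
Notation U := (U lam t).
Notation W := (W lam t).
Definition Av m := Aval (lam * (t (S m) - t m)).
Definition Bv m := Bval (lam * (t (S m) - t m)).
Definition Gv m := Gval (lam * (t (S m) - t m)).

Lemma piece_W' P c k : (0 < k)%nat -> (k <= n)%nat ->
  (forall m x, (m < n)%nat -> t m <= x <= t (S m) -> P x = c m * U m x + c (S m) * W m x) ->
  RInt (fun x => P x * W (k-1) x) (t (k-1)) (t k) = (c (k-1)%nat * Bv (k-1) + c k * Av (k-1)) / lam.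
Proof. intros Hk Hkn HP.
  pose proof (piece_W lam n t Hlam Hinc Hpi P (c (k-1)%nat) (c (S (k-1))) (k-1) ltac:(lia)
    (fun x Hx => HP (k-1)%nat x ltac:(lia) Hx)) as H.
  replace (S (k-1)) with k in H by lia. unfold Av, Bv. replace (S (k-1)) with k by lia. exact H. Qed.

Lemma bound_W' F N k : (0 < k)%nat -> (k <= n)%nat -> cont F -> (forall x, Rabs (F x) <= N) ->
  Rabs (RInt (fun x => F x * W (k-1) x) (t (k-1)) (t k)) <= N * Gv (k-1) / lam.
Proof. intros Hk Hkn HF HN.
  pose proof (bound_W lam n t Hlam Hinc Hpi F N (k-1) ltac:(lia) HF (fun x _ => HN x)) as H.
  replace (S (k-1)) with k in H by lia. unfold Gv. replace (S (k-1)) with k by lia. exact H. Qed.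

Lemma p_side P c k : cont P -> (0 < n)%nat -> (k <= n)%nat ->
  (forall m x, (m < n)%nat -> t m <= x <= t (S m) -> P x = c m * U m x + c (S m) * W m x) ->
  lam * RInt (fun x => P x * phi k x) (t 0) (t n) =
  (if Nat.eqb k 0 then 0 else c (k-1)%nat * Bv (k-1) + c k * Av (k-1)) +
  (if Nat.ltb k n then c k * Av k + c (S k) * Bv k else 0).
Proof. intros HP Hn Hk HPw.
  rewrite (split_int lam n t Hlam Hinc Hpi P k HP Hn Hk).
  destruct (Nat.eqb_spec k 0) as [E0|E0]; destruct (Nat.ltb_spec k n) as [L|L].
  - rewrite (piece_U lam n t Hlam Hinc Hpi P (c k) (c (S k)) k L (fun x Hx => HPw k x L Hx)).
    unfold Av, Bv. Req. field. lra.
  - lia.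
  - rewrite (piece_W' P c k) by (auto; lia).
    rewrite (piece_U lam n t Hlam Hinc Hpi P (c k) (c (S k)) k L (fun x Hx => HPw k x L Hx)).
    unfold Av, Bv. Req. field. lra.
  - rewrite (piece_W' P c k) by (auto; lia). Req. field. lra.
Qed.

Lemma f_side F N k : cont F -> (0 < n)%nat -> (k <= n)%nat -> (forall x, Rabs (F x) <= N) ->
  Rabs (lam * RInt (fun x => F x * phi k x) (t 0) (t n)) <=
  N * ((if Nat.eqb k 0 then 0 else Gv (k-1)) + (if Nat.ltb k n then Gv k else 0)).
Proof. intros HF Hn Hk HN.
  rewrite (split_int lam n t Hlam Hinc Hpi F k HF Hn Hk).
  rewrite Rabs_mult, (Rabs_pos_eq lam) by lra.
  destruct (Nat.eqb_spec k 0) as [E0|E0]; destruct (Nat.ltb_spec k n) as [L|L].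
  - pose proof (bound_U lam n t Hlam Hinc Hpi F N k L HF (fun x _ => HN x)) as H2.
    fold (Gv k) in H2. rewrite Rplus_0_l. apply (Rmult_le_compat_l lam) in H2; [|lra].
    replace (lam * (N * Gv k / lam)) with (N * Gv k) in H2 by (field; lra). lra.
  - lia.
  - pose proof (bound_U lam n t Hlam Hinc Hpi F N k L HF (fun x _ => HN x)) as H2.
    pose proof (bound_W' F N k ltac:(lia) Hk HF HN) as H1.
    fold (Gv k) in H2.
    eapply Rle_trans. apply Rmult_le_compat_l. lra. apply Rabs_triang.
    assert (lam * Rabs (RInt (fun x : R => F x * W (k - 1) x) (t (k - 1)) (t k)) <= N * Gv (k-1)).
    { apply (Rmult_le_compat_l lam) in H1; [|lra]. replace (lam * (N * Gv (k-1) / lam)) with (N * Gv (k-1)) in H1 by (field; lra). lra. }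
    assert (lam * Rabs (RInt (fun x : R => F x * U k x) (t k) (t (S k))) <= N * Gv k).
    { apply (Rmult_le_compat_l lam) in H2; [|lra]. replace (lam * (N * Gv k / lam)) with (N * Gv k) in H2 by (field; lra). lra. }
    lra.
  - pose proof (bound_W' F N k ltac:(lia) Hk HF HN) as H1. rewrite Rplus_0_r.
    apply (Rmult_le_compat_l lam) in H1; [|lra]. replace (lam * (N * Gv (k-1) / lam)) with (N * Gv (k-1)) in H1 by (field; lra).
    rewrite Rplus_0_r. exact H1.
Qed.

Lemma exists_proj f : (0 < n)%nat -> t 0 = 0 -> cont_on 0 (t n) f ->
  exists p, is_orth_proj lam 0 (t n) n t f p.
Proof. intros Hn Ht0 Hf.
  assert (H0n : 0 <= t n) by (rewrite <- Ht0; apply (tmono n t Hinc); lia).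
  set (ft := fun x => f (clamp 0 (t n) x)).
  assert (Hft : cont ft) by (apply cont_on_ext; auto).
  destruct (GS (t n) phi H0n (cont_phi lam n t) (S n) ft Hft) as [c Hc].
  exists (lcf phi c (S n)). split. apply spline_lcf; auto.
  intros s Hs.
  assert (Hs' : trig_spline lam (t 0) (t n) n t s) by (rewrite Ht0; auto).
  set (sr := lcf phi (fun k => s (t k)) (S n)).
  assert (E1 : L2ip 0 (t n) f s = ip (t n) ft sr).
  { unfold L2ip, ip. apply RInt_extR. intros x Hx. rewrite Rmin_left, Rmax_right in Hx by lra.
    unfold ft. rewrite clamp_mid by lra. unfold sr.
    rewrite <- (spline_repr lam n t Hlam Hinc Hpi s Hs' Hn x) by (rewrite Ht0; lra). auto. }
  assert (E2 : L2ip 0 (t n) (lcf phi c (S n)) s = ip (t n) (lcf phi c (S n)) sr).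
  { unfold L2ip, ip. apply RInt_extR. intros x Hx. rewrite Rmin_left, Rmax_right in Hx by lra.
    unfold sr. rewrite <- (spline_repr lam n t Hlam Hinc Hpi s Hs' Hn x) by (rewrite Ht0; lra). auto. }
  rewrite E1, E2. unfold sr.
  rewrite !ip_lcf_r; auto. 2,4: apply cont_phi. 2: apply cont_lcf; apply cont_phi.
  apply lcf_ext_ph. intros k Hk. apply Hc; auto.
Qed.

End Sp.

End P8.
Import P8.

Module P9.
Open Scope R_scope.

Lemma scale_abs l R K : 0 < l -> Rabs R <= K / l -> Rabs (l * R) <= K.
Proof. intros Hl H. rewrite Rabs_mult, (Rabs_pos_eq l) by lra.
  apply (Rmult_le_compat_l l) in H; [|lra]. replace (l * (K / l)) with K in H by (field; lra). exact H. Qed.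

Lemma div_le l x y : 0 < l -> x <= y -> x / l <= y / l.
Proof. intros. unfold Rdiv. apply Rmult_le_compat_r; [apply Rlt_le, Rinv_0_lt_compat|]; lra. Qed.

Section Sp.
Variable lam : R.
Variable n : nat.
Variable t : nat -> R.
Hypothesis Hlam : 0 < lam.
Hypothesis Hinc : forall i, (i < n)%nat -> t i < t (S i).
Hypothesis Hpi : forall i, (i < n)%nat -> lam * (t (S i) - t i) < PI.

Notation phi := (phi lam n t).
Notation U := (U lam t).
Notation W := (W lam t).
Notation Av := (Av lam t).
Notation Bv := (Bv lam t).
Notation Gv := (Gv lam t).

Lemma bound_main eps j f p :
  (0 < n)%nat -> t 0 = 0 -> (j < n)%nat ->
  0 < lam * eps <= 1/50 ->
  lam * (t (S j) - t j) = PI - lam * eps ->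
  (forall m, (m < n)%nat -> m <> j -> 0 < lam * (t (S m) - t m) <= lam * eps) ->
  cont_on 0 (t n) f -> is_orth_proj lam 0 (t n) n t f p ->
  forall i, (i <= n)%nat -> Rabs (p (t i)) <= 9 * sup_norm 0 (t n) f.
Proof. intros Hn Ht0 Hj He Hbig Hsm Hf Hp.
  assert (H0n : 0 < t n) by (rewrite <- Ht0; apply Rlt_le_trans with (t 1%nat); [apply Hinc; lia|apply (tmono n t Hinc); lia]).
  remember (sup_norm 0 (t n) f) as N eqn:HNdef.
  set (ft := fun x => f (clamp 0 (t n) x)).
  assert (HftC : cont ft) by (apply cont_on_ext; auto; lra).
  assert (HfN : forall x, Rabs (ft x) <= N).
  { intros x. unfold ft. rewrite HNdef. apply sup_bound; auto. lra. apply clamp_in. lra. }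
  assert (HN0 : 0 <= N) by (eapply Rle_trans; [apply Rabs_pos|apply (HfN 0)]).
  set (pt := fun x => p (clamp 0 (t n) x)).
  assert (HptC : cont pt) by (apply cont_on_ext; [lra|]; exact (proj1 (proj1 Hp))).
  set (c := fun k => p (t k)).
  assert (Hpw : forall m x, (m < n)%nat -> t m <= x <= t (S m) -> pt x = c m * U m x + c (S m) * W m x).
  { intros m x Hm Hx. unfold pt, c.
    assert (t 0 <= t m) by (apply (tmono n t Hinc); lia).
    assert (t (S m) <= t n) by (apply (tmono n t Hinc); lia).
    rewrite clamp_mid by lra.
    destruct (proj2 (proj1 Hp) m Hm) as [al [be Hab]].
    rewrite (Hab x Hx), (Hab (t m) ltac:(split; [lra|apply Rlt_le, Hinc; auto])),
            (Hab (t (S m)) ltac:(split; [apply Rlt_le, Hinc; auto|lra])).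
    exact (trig_repr lam n t Hlam Hinc Hpi m al be x Hm Hx). }
  assert (Horth : forall k, (k <= n)%nat ->
     lam * RInt (fun x => ft x * phi k x) (t 0) (t n) = lam * RInt (fun x => pt x * phi k x) (t 0) (t n)).
  { intros k Hk. f_equal.
    pose proof (proj2 Hp (phi k) (spline_phi lam n t Hlam Hinc Hpi 0 (t n) k Hk)) as H.
    unfold L2ip in H. rewrite Ht0.
    rewrite (RInt_extR (fun x => ft x * phi k x) (fun x => f x * phi k x)).
    rewrite (RInt_extR (fun x => pt x * phi k x) (fun x => p x * phi k x)). exact H.
    intros x Hx. rewrite Rmin_left, Rmax_right in Hx by lra. unfold pt. rewrite clamp_mid by lra. auto.
    intros x Hx. rewrite Rmin_left, Rmax_right in Hx by lra. unfold ft. rewrite clamp_mid by lra. auto. }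
  assert (HX : forall k, (k <= n)%nat ->
    Rabs ((if Nat.eqb k 0 then 0 else c (k-1)%nat * Bv (k-1) + c k * Av (k-1)) +
          (if Nat.ltb k n then c k * Av k + c (S k) * Bv k else 0))
    <= N * ((if Nat.eqb k 0 then 0 else Gv (k-1)) + (if Nat.ltb k n then Gv k else 0))).
  { intros k Hk. rewrite <- (p_side lam n t Hlam Hinc Hpi pt c k HptC Hn Hk Hpw).
    rewrite <- Horth by auto. apply (f_side lam n t Hlam Hinc Hpi ft N k HftC Hn Hk HfN). }
  assert (Hsf : forall m, (m < n)%nat -> m <> j ->
     Gv m / 4 <= Av m - Bv m /\ Av m + Bv m <= lam * eps /\ 0 <= Bv m /\ 0 < Gv m <= lam * eps).
  { intros m Hm Hmj. destruct (Hsm m Hm Hmj) as [Hs1 Hs2].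
    assert (HH : 0 < lam * (t (S m) - t m) <= 1/50) by lra.
    destruct (small_facts (lam * (t (S m) - t m)) HH) as [F1 [F2 [F3 [F4 F5]]]].
    unfold Av, Bv, Gv. split; [|split; [|split]]; try lra. }
  destruct (argmax (fun k => Rabs (c k)) n) as [i0 [Hi0 Hmax]]. simpl in Hmax.
  assert (Hmain : Rabs (c i0) <= 9 * N).
  { destruct (Nat.eq_dec i0 j) as [Eij|Nij]; [|destruct (Nat.eq_dec i0 (S j)) as [Eij|Nij']].
    3: {
      assert (Rabs (c i0) <= 4 * N); [|lra].
      apply (algA (c i0) (c (i0-1)%nat) (c (S i0)) (Av (i0-1)) (Bv (i0-1)) (Gv (i0-1)) (Av i0) (Bv i0) (Gv i0)
        (if Nat.eqb i0 0 then 0 else 1) (if Nat.ltb i0 n then 1 else 0) N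
        ((if Nat.eqb i0 0 then 0 else c (i0-1)%nat * Bv (i0-1) + c i0 * Av (i0-1)) +
          (if Nat.ltb i0 n then c i0 * Av i0 + c (S i0) * Bv i0 else 0))).
      - destruct (Nat.eqb i0 0); auto.
      - destruct (Nat.ltb i0 n); auto.
      - destruct (Nat.eqb_spec i0 0); destruct (Nat.ltb_spec i0 n); auto; lia.
      - destruct (Nat.eqb_spec i0 0). intros; lra. intros _.
        destruct (Hsf (i0-1)%nat ltac:(lia) ltac:(lia)) as [F1 [F2 [F3 F4]]].
        split. apply Hmax; lia. split; lra.
      - destruct (Nat.ltb_spec i0 n). 2: intros; lra. intros _.
        destruct (Hsf i0 ltac:(lia) ltac:(lia)) as [F1 [F2 [F3 F4]]].
        split. apply Hmax; lia. split; lra.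
      - auto.
      - destruct (Nat.eqb i0 0); destruct (Nat.ltb i0 n); ring.
      - eapply Rle_trans. apply HX; auto. right. destruct (Nat.eqb i0 0); destruct (Nat.ltb i0 n); ring. }
    all: assert (HMj : Rabs (c i0) = Rabs (c j) \/ Rabs (c i0) = Rabs (c (S j))) by (subst; auto).
    all: clear Eij.
    all: destruct (big_facts (lam * eps) He) as [B1 [B2 [B3 B4]]].
    all: assert (EAv : Av j = Aval (PI - lam * eps)) by (unfold P8.Av; rewrite Hbig; auto).
    all: assert (EBv : Bv j = Bval (PI - lam * eps)) by (unfold P8.Bv; rewrite Hbig; auto).
    all: assert (EGv : Gv j = Gval (PI - lam * eps)) by (unfold P8.Gv; rewrite Hbig; auto).
    all: pose proof (split_int lam n t Hlam Hinc Hpi ft j HftC Hn ltac:(lia)) as Sj.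
    all: pose proof (split_int lam n t Hlam Hinc Hpi ft (S j) HftC Hn ltac:(lia)) as Sj1.
    all: rewrite (proj2 (Nat.ltb_lt j n) Hj) in Sj.
    all: rewrite (proj2 (Nat.eqb_neq (S j) 0)) in Sj1 by lia.
    all: replace (S j - 1)%nat with j in Sj1 by lia.
    all: pose proof (p_side lam n t Hlam Hinc Hpi pt c j HptC Hn ltac:(lia) Hpw) as Pj.
    all: pose proof (p_side lam n t Hlam Hinc Hpi pt c (S j) HptC Hn ltac:(lia) Hpw) as Pj1.
    all: rewrite (proj2 (Nat.ltb_lt j n) Hj) in Pj.
    all: rewrite (proj2 (Nat.eqb_neq (S j) 0)) in Pj1 by lia.
    all: replace (S j - 1)%nat with j in Pj1 by lia.
    all: pose proof (Horth j ltac:(lia)) as Oj.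
    all: pose proof (Horth (S j) ltac:(lia)) as Oj1.
    all: rewrite Sj, Pj in Oj. all: rewrite Sj1, Pj1 in Oj1.
    all: assert (HUW : forall x, t j <= x <= t (S j) -> Rabs (U j x - W j x) <= 2).
    all: try (intros x Hx; unfold P2.U, P2.W, Sm;
      replace (sin (lam * (t (S j) - x)) / sin (lam * (t (S j) - t j)) -
               sin (lam * (x - t j)) / sin (lam * (t (S j) - t j)))
        with ((sin (lam * (t (S j) - x)) - sin (lam * (x - t j))) / sin (lam * (t (S j) - t j)))
        by (unfold Rdiv; ring);
      apply UW_bound; [ring | pose proof PI_lb; lra | ];
      rewrite Hbig; replace ((PI - lam * eps) / 2) with (PI / 2 - lam * eps / 2) by field;
      rewrite sin_shift; destruct (cos_tay (lam * eps / 2)) as [Ct _]; [lra|];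
      assert ((lam * eps / 2)^2 <= 1/10000) by (simpl; nra); lra).
    all: apply (algB (c j) (c (S j)) (c (j-1)%nat) (c (S (S j))) (Rabs (c i0)) N (Av j) (Bv j)
        (Av (j-1)) (Bv (j-1)) (Av (S j)) (Bv (S j)) (sin (lam * eps)) (lam * eps) PI
        (if Nat.eqb j 0 then 0 else 1) (if Nat.ltb (S j) n then 1 else 0)
        (lam * RInt (fun x => ft x * W (j-1) x) (t (j-1)) (t j))
        (lam * RInt (fun x => ft x * U (S j) x) (t (S j)) (t (S (S j))))
        (lam * RInt (fun x => ft x * U j x) (t j) (t (S j)))
        (lam * RInt (fun x => ft x * W j x) (t j) (t (S j)))).
    all: try (destruct (Nat.eqb j 0); auto; fail).
    all: try (destruct (Nat.ltb (S j) n); auto; fail).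
    all: try (apply Hmax; lia).
    all: try exact HMj.
    all: try exact PI_4.
    all: try exact HN0.
    all: try lra.
    all: try (rewrite EAv, EBv; lra).
    all: try (destruct (Nat.eqb_spec j 0) as [Ej|Ej]; [intros; lra|intros _];
      destruct (Hsf (j-1)%nat ltac:(lia) ltac:(lia)) as [F1 [F2 [F3 F4]]];
      split; [apply Hmax; lia|]; split; [lra|]; split; [lra|]; split; [lra|];
      apply scale_abs; [lra|]; eapply Rle_trans;
      [apply (bound_W' lam n t Hlam Hinc Hpi ft N j ltac:(lia) ltac:(lia) HftC HfN)|];
      apply div_le; [lra|]; apply Rmult_le_compat_l; lra).
    all: try (destruct (Nat.ltb_spec (S j) n) as [L|L]; [intros _|intros; lra];
      destruct (Hsf (S j) L ltac:(lia)) as [F1 [F2 [F3 F4]]];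
      split; [apply Hmax; lia|]; split; [lra|]; split; [lra|]; split; [lra|];
      apply scale_abs; [lra|]; eapply Rle_trans;
      [apply (bound_U lam n t Hlam Hinc Hpi ft N (S j) L HftC (fun x _ => HfN x))|];
      apply div_le; [lra|]; apply Rmult_le_compat_l; [lra|]; unfold P8.Gv in F4; lra).
    all: try (destruct (Nat.eqb_spec j 0) as [Ej|Ej]; cbv iota in Oj |- *; Req; lra).
    all: try (destruct (Nat.ltb_spec (S j) n) as [L|L]; cbv iota in Oj1 |- *; Req; lra).
    all: try (apply scale_abs; [lra|]; eapply Rle_trans;
      [apply (bound_U lam n t Hlam Hinc Hpi ft N j Hj HftC (fun x _ => HfN x))|];
      rewrite Hbig; apply div_le; [lra|]; apply Rmult_le_compat_l; lra).
    all: try (apply scale_abs; [lra|]; eapply Rle_trans;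
      [apply (bound_W lam n t Hlam Hinc Hpi ft N j Hj HftC (fun x _ => HfN x))|];
      rewrite Hbig; apply div_le; [lra|]; apply Rmult_le_compat_l; lra).
    all: (rewrite <- Rmult_minus_distr_l; apply scale_abs; [lra|]; eapply Rle_trans;
      [apply (bound_UW lam n t Hinc ft N j Hj HftC (fun x _ => HfN x) HUW)|];
      assert (Ehj : t (S j) - t j = (PI - lam * eps) / lam) by (rewrite <- Hbig; field; lra);
      rewrite Ehj;
      replace (2 * N * PI / lam) with (2 * N * ((PI - lam * eps) / lam) + 2 * N * eps) by (field; lra);
      assert (0 <= 2 * N * eps) by (assert (0 < eps) by (apply (Rmult_lt_reg_l lam); lra); nra); lra).
    }
  intros i Hi. specialize (Hmax i Hi). unfold c in Hmax, Hmain. lra.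
Qed.

End Sp.

End P9.
Import P9.


Theorem mainTheorem4 :
  forall lam : R, 0 < lam ->
  exists C eps0 : R, 0 < eps0 /\
    forall eps : R, 0 < eps < eps0 ->
    forall (n : nat) (t : nat -> R) (j : nat),
      is_partition 0 (PI / lam) n t ->
      (j < n)%nat ->
      t (S j) - t j = PI / lam - eps ->
      forall f : R -> R, cont_on 0 (PI / lam) f ->
        (exists p, is_orth_proj lam 0 (PI / lam) n t f p) /\
        (forall p, is_orth_proj lam 0 (PI / lam) n t f p ->
           forall i, (i <= n)%nat ->
             Rabs (p (t i)) <= (38 / PI + C * eps) * sup_norm 0 (PI / lam) f).
Proof.
  intros lam Hlam. exists 0, (1 / (50 * lam)). split.
  { apply Rdiv_lt_0_compat; lra. }
  intros eps Heps n t j Hpart Hj Hlen f Hf.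
  destruct Hpart as [Hn [Ht0 [Htn Hinc]]].
  pose proof PI_lb as HPIl. pose proof PI_4 as HPIu.
  assert (He : 0 < lam * eps <= 1/50).
  { split. apply Rmult_lt_0_compat; lra.
    assert (lam * eps <= lam * (1 / (50 * lam))) by (apply Rmult_le_compat_l; lra).
    replace (lam * (1 / (50 * lam))) with (1/50) in H by (field; lra). lra. }
  assert (Hsum : forall m, (m < n)%nat -> m <> j -> t (S m) - t m <= eps).
  { intros m Hm Hmj. destruct (Nat.lt_ge_cases m j) as [Hlt|Hge].
    - assert (t (S m) <= t j) by (apply (tmono n t Hinc); lia).
      assert (t 0%nat <= t m) by (apply (tmono n t Hinc); lia).
      assert (t (S j) <= t n) by (apply (tmono n t Hinc); lia). lra.
    - assert (t (S j) <= t m) by (apply (tmono n t Hinc); lia).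
      assert (t 0%nat <= t j) by (apply (tmono n t Hinc); lia).
      assert (t (S m) <= t n) by (apply (tmono n t Hinc); lia). lra. }
  assert (Hsm : forall m, (m < n)%nat -> m <> j -> 0 < lam * (t (S m) - t m) <= lam * eps).
  { intros m Hm Hmj. specialize (Hinc m Hm). specialize (Hsum m Hm Hmj). split.
    apply Rmult_lt_0_compat; lra. apply Rmult_le_compat_l; lra. }
  assert (Hbig : lam * (t (S j) - t j) = PI - lam * eps) by (rewrite Hlen; field; lra).
  assert (Hpi : forall i, (i < n)%nat -> lam * (t (S i) - t i) < PI).
  { intros i Hi. destruct (Nat.eq_dec i j) as [->|Hij]. lra.
    specialize (Hsm i Hi Hij). lra. }
  rewrite <- Htn in Hf |- *.
  split.
  - apply (exists_proj lam n t Hlam Hinc Hpi f Hn Ht0 Hf).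
  - intros p Hp i Hi. rewrite Rmult_0_l, Rplus_0_r.
    eapply Rle_trans.
    apply (bound_main lam n t Hlam Hinc Hpi eps j f p Hn Ht0 Hj He Hbig Hsm Hf Hp i Hi).
    apply Rmult_le_compat_r.
    + assert (H0n : t 0%nat <= t n) by (apply (tmono n t Hinc); lia).
      apply Rle_trans with (Rabs (f 0)); [apply Rabs_pos|]. apply (sup_bound f 0 (t n)); auto; lra.
    + apply (Rmult_le_reg_r PI). lra. replace (38 / PI * PI) with 38 by (field; lra). lra.
Qed.
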